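(* Let $M$ be a regular $po$-$\Gamma$-semigroup. Then every fuzzy right ideal and every fuzzy left ideal $f$ of $M$ is idempotent, i.e. $f\circ f=f$.
   Context: Let $M$ and $\Gamma$ be nonempty sets with a map $M\times\Gamma\times M\to M$, $(a,\gamma,b)\mapsto a\gamma b$, satisfying $(a\gamma b)\mu c=a\gamma(b\mu c)$ for all $a,b,c\in M$, $\gamma,\mu\in\Gamma$. A $po$-$\Gamma$-semigroup is such an $M$ with a partial order $\le$ such that $a\le b$ implies $a\gamma c\le b\gamma c$ and $c\gamma a\le c\gamma b$ for all $c\in M$, $\gamma\in\Gamma$. For $H\subseteq M$, $(H]=\{t\in M: t\le h \text{ for some } h\in H\}$; $a\Gamma M\Gamma a=\{a\gamma x\mu a: x\in M,\gamma,\mu\in\Gamma\}$. $M$ is regular if $a\in(a\Gamma M\Gamma a]$ for every $a\in M$. A fuzzy subset of $M$ is a map $M\to[0,1]$. For $a\in M$ let $A_a=\{(y,z)\in M\times M: a\le y\gamma z \text{ for some }\gamma\in\Gamma\}$. $(f\circ g)(a)=\bigvee_{(y,z)\in A_a}\min\{f(y),g(z)\}$ if $A_a\ne\emptyset$, and $0$ otherwise. A fuzzy right (resp. left) ideal is a fuzzy subset $f$ with $f(x\gamma y)\ge f(x)$ (resp. $f(x\gamma y)\ge f(y)$) for all $x,y\in M,\gamma\in\Gamma$, and $x\le y\Rightarrow f(x)\ge f(y)$. *)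

(* Defs.v *)
From Stdlib Require Import Reals ClassicalEpsilon.
From Coquelicot Require Import Coquelicot.
Open Scope R_scope.
Set Implicit Arguments.
Unset Strict Implicit.

Section Defs.
Variables (M Gamma : Type) (op : M -> Gamma -> M -> M) (le : M -> M -> Prop).

Record is_po_gamma_semigroup : Prop := {
  pgs_M_nonempty : inhabited M;
  pgs_Gamma_nonempty : inhabited Gamma;
  pgs_assoc : forall a b c (g m : Gamma), op (op a g b) m c = op a g (op b m c);
  pgs_refl : forall a, le a a;
  pgs_antisym : forall a b, le a b -> le b a -> a = b;
  pgs_trans : forall a b c, le a b -> le b c -> le a c;
  pgs_compat_r : forall a b c (g : Gamma), le a b -> le (op a g c) (op b g c);
  pgs_compat_l : forall a b c (g : Gamma), le a b -> le (op c g a) (op c g b)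
}.

(* a ∈ (aΓMΓa] for every a *)
Definition regular : Prop :=
  forall a : M, exists (x : M) (g m : Gamma), le a (op (op a g x) m a).

Definition fuzzy_subset (f : M -> R) : Prop := forall x, 0 <= f x <= 1.

Definition A_set (a : M) (p : M * M) : Prop :=
  exists g : Gamma, le a (op (fst p) g (snd p)).

Definition fuzzy_comp (f h : M -> R) (a : M) : R :=
  if excluded_middle_informative (exists p, A_set a p)
  then real (Lub_Rbar (fun r => exists p, A_set a p /\ r = Rmin (f (fst p)) (h (snd p))))
  else 0.

Definition fuzzy_right_ideal (f : M -> R) : Prop :=
  fuzzy_subset f /\
  (forall x y (g : Gamma), f (op x g y) >= f x) /\
  (forall x y, le x y -> f x >= f y).

Definition fuzzy_left_ideal (f : M -> R) : Prop :=
  fuzzy_subset f /\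
  (forall x y (g : Gamma), f (op x g y) >= f y) /\
  (forall x y, le x y -> f x >= f y).

End Defs.

(* Main.v *)
Require Import Defs.
From Stdlib Require Import Reals Lra FunctionalExtensionality.
From Coquelicot Require Import Coquelicot.
Open Scope R_scope.

Lemma lub_max (E : R -> Prop) (v : R) :
  E v -> (forall r, E r -> r <= v) -> real (Lub_Rbar E) = v.
Proof.
  intros Hv Hub.
  rewrite (is_lub_Rbar_unique E (Finite v)); [reflexivity|].
  split.
  - intros x Hx. simpl. apply Hub; auto.
  - intros b Hb. apply Hb. exact Hv.
Qed.

Theorem corollary31 (M Gamma : Type) (op : M -> Gamma -> M -> M) (le : M -> M -> Prop) :
  is_po_gamma_semigroup op le ->
  regular op le ->
  (forall f : M -> R, fuzzy_right_ideal op le f -> fuzzy_comp op le f f = f) /\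
  (forall f : M -> R, fuzzy_left_ideal op le f -> fuzzy_comp op le f f = f).
Proof.
  intros HP Hreg.
  split; intros f [_ [Hid Hmon]]; apply functional_extensionality; intro a;
  unfold fuzzy_comp; destruct (Hreg a) as [x [g [m Ha]]];
  (destruct (ClassicalEpsilon.excluded_middle_informative _) as [Hne|Hne];
   [| exfalso; apply Hne; exists (op a g x, a); exists m; exact Ha]);
  apply lub_max.
  - exists (op a g x, a). split. exists m; exact Ha. simpl.
    specialize (Hid a x g). unfold Rmin; destruct Rle_dec; lra.
  - intros r [[y z] [[h Hh] ->]]. simpl in *.
    specialize (Hid y z h). specialize (Hmon _ _ Hh).
    unfold Rmin; destruct Rle_dec; lra.
  - exists (a, op x m a). split. exists g. simpl. rewrite <- (pgs_assoc HP). exact Ha. simpl.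
    specialize (Hid x a m). unfold Rmin; destruct Rle_dec; lra.
  - intros r [[y z] [[h Hh] ->]]. simpl in *.
    specialize (Hid y z h). specialize (Hmon _ _ Hh).
    unfold Rmin; destruct Rle_dec; lra.
Qed.
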